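(* Consider the multi-agent setting, the problems $\mathrm{FTOCP}^{(m)}_k(\hat N)$ and the CMC procedure described in the context, with all agents $m=1,\dots,M$ operating in closed loop under the CMC procedure. If at time $k=0$ the CMC procedure succeeds for every agent, then the CMC procedure succeeds for every agent at every time $k=1,2,3,\dots$ (recursive feasibility).
   Context: Setting. Let $\Delta t>0$, $\bar a>0$, $\bar v>0$, $\rho>0$, integers $M\ge 2$ and $N\ge1$, and $\tilde N:=\lceil \bar v/(\bar a\Delta t)\rceil$ with $\tilde N\le N-1$ ($\lceil r\rceil$ = smallest integer $\ge r$). Each agent $m=1,\dots,M$ has state $\mathbf{s}^{(m)}_k=(\mathbf{p}^{(m)}_k,\mathbf{v}^{(m)}_k)\in\mathbb{R}^3\times\mathbb{R}^3$ (position, velocity) and input $\mathbf{a}^{(m)}_k\in\mathbb{R}^3$, with exact, disturbance-free dynamics $\mathbf{s}_{k+1}=\mathbf{A}\mathbf{s}_k+\mathbf{B}\mathbf{a}_k$, where $\mathbf{A}=\begin{bmatrix}I_3&\Delta t I_3\\0&I_3\end{bmatrix}$, $\mathbf{B}=\begin{bmatrix}\tfrac{(\Delta t)^2}{2}I_3\\ \Delta t I_3\end{bmatrix}$; initial velocities satisfy $\|\mathbf{v}^{(m)}_0\|_2\le\bar v$. Each agent is a ball of radius $\rho$ centred at its position. Each agent $m$ has a position constraint set $\mathbb{S}^{(m)}\subseteq\mathbb{R}^3$ and a cost function $J^{(m)}$ of its nominal inputs and states; whenever an FTOCP below is feasible it is assumed to have an optimal solution (denoted by a star). All agents share a synchronized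 clock, measure all agents' states exactly, and do not communicate. Reference contingency plan. For a state $(\mathbf{p},\mathbf{v})$ let $n=\lceil\|\mathbf{v}\|_2/(\bar a\Delta t)\rceil$. The reference contingency trajectory starts at $(\mathbf{p},\mathbf{v})$ and applies the input $-\mathbf{v}/(n\Delta t)$ for steps $0,\dots,n-1$ and $\mathbf{0}$ afterwards (if $n=0$ the agent stays at $\mathbf{p}$). Denote by $\mathbf{r}^{(j)}_{i|k}$, $i=0,1,2,\dots$, the positions of the reference contingency trajectory computed from $\mathbf{s}^{(j)}_k$. Collision-avoidance constraint of agent $m$ w.r.t. agent $j\ne m$ at step $i$: with $d^{(j,m)}_{i|k}=\|\mathbf{r}^{(j)}_{i|k}-\mathbf{r}^{(m)}_{i|k}\|_2$, $\mathbf{g}^{(j,m)}_{i|k}=(\mathbf{r}^{(j)}_{i|k}-\mathbf{r}^{(m)}_{i|k})/d^{(j,m)}_{i|k}$ and $h^{(j,m)}_{i|k}=\mathbf{g}^{(j,m)\mathrm T}_{i|k}\mathbf{r}^{(m)}_{i|k}+\tfrac12 d^{(j,m)}_{i|k}-\rho$, a point $\mathbf{q}\in\mathbb{R}^3$ satisfies it iff $\mathbf{g}^{(j,m)\mathrm T}_{i|k}\mathbf{q}\le h^{(j,m)}_{i|k}$. (The FTOCP is well defined only when all these $d^{(j,m)}_{i|k}$ are nonzero.) $\mathrm{FTOCP}^{(m)}_k(\hat N)$, for an integer $\hat N\ge0$: minimize $J^{(m)}$ over $\mathbf{a}^{(m)}_{0|k},\dots,\mathbf{a}^{(m)}_{N-1|k}$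 subject to: nominal states $\mathbf{s}^{(m)}_{0|k}=\mathbf{s}^{(m)}_k$, $\mathbf{s}^{(m)}_{i+1|k}=\mathbf{A}\mathbf{s}^{(m)}_{i|k}+\mathbf{B}\mathbf{a}^{(m)}_{i|k}$; $\|\mathbf{a}^{(m)}_{i|k}\|_2\le\bar a$ for $i=0,\dots,N-1$; the position of $\mathbf{s}^{(m)}_{i|k}$ lies in $\mathbb{S}^{(m)}$ for $i=1,\dots,N$; contingency states $\tilde{\mathbf{s}}^{(m)}_{1|k}=\mathbf{s}^{(m)}_{1|k}$, and, writing $\mathbf{v}^{(m)}_{1|k}$ for the velocity of $\mathbf{s}^{(m)}_{1|k}$, contingency inputs $\tilde{\mathbf{a}}^{(m)}_{i|k}=-\mathbf{v}^{(m)}_{1|k}/(\hat N\Delta t)$ and $\tilde{\mathbf{s}}^{(m)}_{i+1|k}=\mathbf{A}\tilde{\mathbf{s}}^{(m)}_{i|k}+\mathbf{B}\tilde{\mathbf{a}}^{(m)}_{i|k}$ for $i=1,\dots,\hat N$, and $\tilde{\mathbf{s}}^{(m)}_{i|k}=\tilde{\mathbf{s}}^{(m)}_{\hat N+1|k}$ for $\hat N+1<i\le N$; the position of $\tilde{\mathbf{s}}^{(m)}_{i|k}$ lies in $\mathbb{S}^{(m)}$ for $i=2,\dots,\hat N+1$; and for every $j\ne m$ and every $i=1,\dots,N$ the position of $\tilde{\mathbf{s}}^{(m)}_{i|k}$ satisfies the collision-avoidance constraint of agent $m$ w.r.t. $j$ at step $i$. CMC procedure of agent $m$ at time $k$. Let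 $\tilde N^{(m)}_k=\lceil\|\mathbf{v}^{(m)}_k\|_2/(\bar a\Delta t)\rceil$. Call a solution valid if its $\mathbf{v}^{(m)\star}_{1|k}$ satisfies $\lceil\|\mathbf{v}^{(m)\star}_{1|k}\|_2/(\bar a\Delta t)\rceil=\hat N$. (a) If $\tilde N^{(m)}_k<\tilde N$, solve $\mathrm{FTOCP}^{(m)}_k(\tilde N^{(m)}_k+1)$; if it is feasible and its optimal solution is valid, apply $\mathbf{a}^{(m)\star}_{0|k}$ and stop. (b) Otherwise solve $\mathrm{FTOCP}^{(m)}_k(\tilde N^{(m)}_k)$ with the additional constraint $\|\mathbf{v}^{(m)}_{1|k}\|_2\le\bar a\tilde N^{(m)}_k\Delta t$; if it is feasible and its optimal solution is valid, apply $\mathbf{a}^{(m)\star}_{0|k}$ and stop. (c) Otherwise (this step exists only when $\tilde N^{(m)}_k\ge1$) solve $\mathrm{FTOCP}^{(m)}_k(\tilde N^{(m)}_k-1)$ with the additional constraint $\|\mathbf{v}^{(m)}_{1|k}\|_2\le\bar a(\tilde N^{(m)}_k-1)\Delta t$ and apply $\mathbf{a}^{(m)\star}_{0|k}$. The procedure succeeds at time $k$ if it applies an input, i.e. if step (a) or (b) produces a valid optimal solution or the FTOCP in step (c) is (well defined and) feasible. In closed loop, $\mathbf{s}^{(m)}_{k+1}=\mathbf{A}\mathbf{s}^{(m)}_k+\mathbf{B}\mathbf{a}^{(m)\star}_{0|k}$ for every agent. *)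

(* Defs.v *)
From Stdlib Require Import Reals Lra Lia ZArith.
Open Scope R_scope.

Record V3 := mkV3 { vx : R; vy : R; vz : R }.
Definition v3zero : V3 := mkV3 0 0 0.
Definition v3add (a b : V3) : V3 := mkV3 (vx a + vx b) (vy a + vy b) (vz a + vz b).
Definition v3sub (a b : V3) : V3 := mkV3 (vx a - vx b) (vy a - vy b) (vz a - vz b).
Definition v3scale (c : R) (a : V3) : V3 := mkV3 (c * vx a) (c * vy a) (c * vz a).
Definition v3dot (a b : V3) : R := vx a * vx b + vy a * vy b + vz a * vz b.
Definition v3norm (a : V3) : R := sqrt (v3dot a a).

Record St := mkSt { pos : V3; vel : V3 }.

(** ceiling: smallest integer >= r (as a nat; only applied to r >= 0).
    [up x] is the unique integer with x < up x <= x + 1, so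
    floor x = up x - 1 and ceil r = - floor (- r) = 1 - up (- r). *)
Definition ceil_nat (r : R) : nat := Z.to_nat (1 - up (- r))%Z.

Record Params := mkParams {
  dt : R;
  abar : R;    (* acceleration bound *)
  vbar : R;    (* velocity bound *)
  rho : R;     (* agent radius *)
  nagents : nat;  (* M; agents are indexed 0 .. M-1 *)
  hor : nat
}.

Definition Ntil (P : Params) : nat := ceil_nat (vbar P / (abar P * dt P)).

Definition params_ok (P : Params) : Prop :=
  0 < dt P /\ 0 < abar P /\ 0 < vbar P /\ 0 < rho P /\
  (2 <= nagents P)%nat /\ (1 <= hor P)%nat /\ (Ntil P <= hor P - 1)%nat.

(** Dynamics s_{+} = A s + B a with A = [[I, dt I],[0, I]], B = [[dt^2/2 I],[dt I]]. *)
Definition dyn (P : Params) (s : St) (a : V3) : St :=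
  mkSt (v3add (v3add (pos s) (v3scale (dt P) (vel s))) (v3scale (dt P ^ 2 / 2) a))
       (v3add (vel s) (v3scale (dt P) a)).

Fixpoint traj (P : Params) (u : nat -> V3) (s : St) (i : nat) : St :=
  match i with
  | O => s
  | S i' => dyn P (traj P u s i') (u i')
  end.

Definition ref_n (P : Params) (s : St) : nat :=
  ceil_nat (v3norm (vel s) / (abar P * dt P)).

Definition ref_input (P : Params) (s : St) : nat -> V3 :=
  fun t => if (t <? ref_n P s)%nat
           then v3scale (- / (INR (ref_n P s) * dt P)) (vel s)
           else v3zero.

Definition ref_pos (P : Params) (s : St) (i : nat) : V3 :=
  pos (traj P (ref_input P s) s i).

Definition dist_jm (P : Params) (sj sm : St) (i : nat) : R :=
  v3norm (v3sub (ref_pos P sj i) (ref_pos P sm i)).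

Definition ca_constraint (P : Params) (sj sm : St) (i : nat) (q : V3) : Prop :=
  let rj := ref_pos P sj i in
  let rm := ref_pos P sm i in
  let d := dist_jm P sj sm i in
  let g := v3scale (/ d) (v3sub rj rm) in
  v3dot g q <= v3dot g rm + d / 2 - rho P.

(** * FTOCP^{(m)}_k(Nhat)
    X j is the (measured) state of agent j at the current time k;
    u i = a^{(m)}_{i|k}; vb is the optional additional constraint
    ||v^{(m)}_{1|k}|| <= b. *)

Definition nom (P : Params) (X : nat -> St) (m : nat) (u : nat -> V3) (i : nat) : St :=
  traj P u (X m) i.

(** contingency state s~^{(m)}_{i|k}, for i >= 1 *)
Definition cont (P : Params) (X : nat -> St) (m Nhat : nat) (u : nat -> V3)
  (i : nat) : St :=
  let s1 := nom P X m u 1 in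
  let ac := v3scale (- / (INR Nhat * dt P)) (vel s1) in
  traj P (fun _ => ac) s1 (Nat.min (i - 1) Nhat).

(** well-definedness: all d^{(j,m)}_{i|k} nonzero *)
Definition ftocp_wd (P : Params) (X : nat -> St) (m : nat) : Prop :=
  forall j i, (j < nagents P)%nat -> j <> m -> (1 <= i <= hor P)%nat ->
    dist_jm P (X j) (X m) i <> 0.

Definition ftocp_constr (P : Params) (Sset : nat -> V3 -> Prop) (X : nat -> St)
  (m Nhat : nat) (vb : option R) (u : nat -> V3) : Prop :=
  (forall i, (i < hor P)%nat -> v3norm (u i) <= abar P) /\
  (forall i, (1 <= i <= hor P)%nat -> Sset m (pos (nom P X m u i))) /\
  (forall i, (2 <= i <= Nhat + 1)%nat -> Sset m (pos (cont P X m Nhat u i))) /\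
  (forall j i, (j < nagents P)%nat -> j <> m -> (1 <= i <= hor P)%nat ->
      ca_constraint P (X j) (X m) i (pos (cont P X m Nhat u i))) /\
  (match vb with
   | Some b => v3norm (vel (nom P X m u 1)) <= b
   | None => True
   end).

Definition ftocp_feasible (P : Params) (Sset : nat -> V3 -> Prop) (X : nat -> St)
  (m Nhat : nat) (vb : option R) : Prop :=
  ftocp_wd P X m /\ exists u, ftocp_constr P Sset X m Nhat vb u.

(** truncation so that the cost only sees the finitely many decision data *)
Definition trunc {A : Type} (d : A) (n : nat) (f : nat -> A) : nat -> A :=
  fun i => if (i <? n)%nat then f i else d.

Definition ftocp_cost (P : Params) (J : nat -> (nat -> V3) -> (nat -> St) -> R)
  (X : nat -> St) (m : nat) (u : nat -> V3) : R :=
  J m (trunc v3zero (hor P) u)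
      (trunc (mkSt v3zero v3zero) (hor P + 1) (nom P X m u)).

Definition ftocp_optimal (P : Params) (Sset : nat -> V3 -> Prop)
  (J : nat -> (nat -> V3) -> (nat -> St) -> R) (X : nat -> St)
  (m Nhat : nat) (vb : option R) (u : nat -> V3) : Prop :=
  ftocp_wd P X m /\ ftocp_constr P Sset X m Nhat vb u /\
  forall u', ftocp_constr P Sset X m Nhat vb u' ->
    ftocp_cost P J X m u <= ftocp_cost P J X m u'.

Inductive Step := StepA | StepB | StepC.

Definition Nt (P : Params) (X : nat -> St) (m : nat) : nat :=
  ceil_nat (v3norm (vel (X m)) / (abar P * dt P)).

Definition step_Nhat (P : Params) (X : nat -> St) (m : nat) (st : Step) : nat :=
  match st with
  | StepA => (Nt P X m + 1)%nat
  | StepB => Nt P X m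
  | StepC => (Nt P X m - 1)%nat
  end.

Definition step_vb (P : Params) (X : nat -> St) (m : nat) (st : Step) : option R :=
  match st with
  | StepA => None
  | StepB => Some (abar P * INR (Nt P X m) * dt P)
  | StepC => Some (abar P * INR (Nt P X m - 1) * dt P)
  end.

Definition step_feasible P Sset X m st : Prop :=
  ftocp_feasible P Sset X m (step_Nhat P X m st) (step_vb P X m st).

Definition valid (P : Params) (X : nat -> St) (m Nhat : nat) (u : nat -> V3) : Prop :=
  ceil_nat (v3norm (vel (nom P X m u 1)) / (abar P * dt P)) = Nhat.

(** [sel st] is the optimal solution returned by the solver for the FTOCP
    of step [st]; the solver specification: whenever the FTOCP of a step the
    procedure may reach is feasible, the returned solution is optimal. *)
Definition solver_ok (P : Params) (Sset : nat -> V3 -> Prop)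
  (J : nat -> (nat -> V3) -> (nat -> St) -> R) (X : nat -> St) (m : nat)
  (sel : Step -> nat -> V3) : Prop :=
  ((Nt P X m < Ntil P)%nat -> step_feasible P Sset X m StepA ->
     ftocp_optimal P Sset J X m (step_Nhat P X m StepA) (step_vb P X m StepA) (sel StepA)) /\
  (step_feasible P Sset X m StepB ->
     ftocp_optimal P Sset J X m (step_Nhat P X m StepB) (step_vb P X m StepB) (sel StepB)) /\
  ((1 <= Nt P X m)%nat -> step_feasible P Sset X m StepC ->
     ftocp_optimal P Sset J X m (step_Nhat P X m StepC) (step_vb P X m StepC) (sel StepC)).

Definition caseA P Sset X m (sel : Step -> nat -> V3) : Prop :=
  (Nt P X m < Ntil P)%nat /\ step_feasible P Sset X m StepA /\
  valid P X m (step_Nhat P X m StepA) (sel StepA).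

Definition caseB P Sset X m (sel : Step -> nat -> V3) : Prop :=
  ~ caseA P Sset X m sel /\ step_feasible P Sset X m StepB /\
  valid P X m (step_Nhat P X m StepB) (sel StepB).

Definition caseC P Sset X m (sel : Step -> nat -> V3) : Prop :=
  ~ caseA P Sset X m sel /\ ~ caseB P Sset X m sel /\
  (1 <= Nt P X m)%nat /\ step_feasible P Sset X m StepC.

Definition cmc_applies (P : Params) (Sset : nat -> V3 -> Prop) (X : nat -> St)
  (m : nat) (sel : Step -> nat -> V3) (a0 : V3) : Prop :=
  (caseA P Sset X m sel /\ a0 = sel StepA 0%nat) \/
  (caseB P Sset X m sel /\ a0 = sel StepB 0%nat) \/
  (caseC P Sset X m sel /\ a0 = sel StepC 0%nat).

Definition cmc_succeeds (P : Params) (Sset : nat -> V3 -> Prop) (X : nat -> St)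
  (m : nat) (sel : Step -> nat -> V3) : Prop :=
  exists a0, cmc_applies P Sset X m sel a0.

(* Main.v *)
Require Import Defs.
From Stdlib Require Import Reals Lra Lia ZArith Classical.
Open Scope R_scope.

Lemma V3_eq (a b : V3) : vx a = vx b -> vy a = vy b -> vz a = vz b -> a = b.
Proof. destruct a, b; simpl; intros; subst; reflexivity. Qed.

Lemma St_eq (a b : St) : Defs.pos a = Defs.pos b -> vel a = vel b -> a = b.
Proof. destruct a, b; simpl; intros; subst; reflexivity. Qed.

Lemma dot_self_nonneg a : 0 <= v3dot a a.
Proof. unfold v3dot; nra. Qed.

Lemma norm_nonneg a : 0 <= v3norm a.
Proof. apply sqrt_pos. Qed.

Lemma norm_scale c a : v3norm (v3scale c a) = Rabs c * v3norm a.
Proof.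
  unfold v3norm.
  replace (v3dot (v3scale c a) (v3scale c a)) with (Rsqr c * v3dot a a)
    by (unfold v3dot, v3scale, Rsqr; simpl; ring).
  rewrite sqrt_mult; [|apply Rle_0_sqr|apply dot_self_nonneg].
  now rewrite sqrt_Rsqr_abs.
Qed.

Lemma norm_zero : v3norm v3zero = 0.
Proof. unfold v3norm, v3dot, v3zero; simpl. replace (0*0+0*0+0*0) with 0 by ring. apply sqrt_0. Qed.

Lemma dot_le a b : v3dot a b <= v3norm a * v3norm b.
Proof.
  destruct (Rle_or_lt (v3dot a b) 0).
  - pose proof (norm_nonneg a); pose proof (norm_nonneg b); nra.
  - unfold v3norm. rewrite <- sqrt_mult by apply dot_self_nonneg.
    rewrite <- (sqrt_square (v3dot a b)) by lra.
    apply sqrt_le_1. nra. pose proof (dot_self_nonneg a); pose proof (dot_self_nonneg b); nra.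
    destruct a as [a1 a2 a3], b as [b1 b2 b3]; unfold v3dot; simpl.
    pose proof (Rle_0_sqr (a1*b2-a2*b1)); pose proof (Rle_0_sqr (a1*b3-a3*b1));
    pose proof (Rle_0_sqr (a2*b3-a3*b2)); unfold Rsqr in *. nra.
Qed.

Lemma norm_tri a b : v3norm (v3add a b) <= v3norm a + v3norm b.
Proof.
  pose proof (norm_nonneg a); pose proof (norm_nonneg b).
  pose proof (dot_le a b).
  unfold v3norm at 1.
  rewrite <- (sqrt_square (v3norm a + v3norm b)) by lra.
  apply sqrt_le_1. apply dot_self_nonneg. nra.
  replace (v3dot (v3add a b) (v3add a b)) with (v3dot a a + 2 * v3dot a b + v3dot b b)
    by (destruct a, b; unfold v3dot, v3add; simpl; ring).
  assert (v3dot a a = v3norm a * v3norm a) by (unfold v3norm; rewrite sqrt_sqrt; auto using dot_self_nonneg).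
  assert (v3dot b b = v3norm b * v3norm b) by (unfold v3norm; rewrite sqrt_sqrt; auto using dot_self_nonneg).
  nra.
Qed.

Lemma norm0_zero a : v3norm a <= 0 -> a = v3zero.
Proof.
  intro H. pose proof (norm_nonneg a).
  assert (Hd: v3dot a a = 0) by (apply sqrt_eq_0; [apply dot_self_nonneg| unfold v3norm in *; lra]).
  destruct a; unfold v3dot in Hd; simpl in Hd.
  apply V3_eq; simpl; nra.
Qed.

Lemma ceil_spec x : 0 <= x -> x <= INR (ceil_nat x) < x + 1.
Proof.
  intro Hx. unfold ceil_nat.
  destruct (archimed (- x)) as [H1 H2].
  assert (Hz: (0 <= 1 - up (- x))%Z).
  { assert (IZR (1 - up (-x)) > -1) by (rewrite minus_IZR; simpl; lra).
    apply lt_IZR in H. lia. }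
  rewrite INR_IZR_INZ, Z2Nat.id by exact Hz.
  rewrite minus_IZR. simpl. lra.
Qed.

Lemma ceil_unique x n : 0 <= x -> INR n - 1 < x <= INR n -> ceil_nat x = n.
Proof.
  intros Hx [H1 H2]. unfold ceil_nat.
  assert (Hu: (1 - Z.of_nat n)%Z = up (- x)).
  { apply tech_up; rewrite minus_IZR, <- INR_IZR_INZ; simpl; lra. }
  rewrite <- Hu. replace (1 - (1 - Z.of_nat n))%Z with (Z.of_nat n) by lia.
  apply Nat2Z.id.
Qed.

Lemma ceil_mono x y : 0 <= x -> x <= y -> (ceil_nat x <= ceil_nat y)%nat.
Proof.
  intros Hx Hxy. pose proof (ceil_spec x Hx). pose proof (ceil_spec y ltac:(lra)).
  assert (INR (ceil_nat x) < INR (ceil_nat y) + 1) by lra.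
  rewrite <- S_INR in H1. apply INR_lt in H1. lia.
Qed.

Lemma div_nonneg x c : 0 <= x -> 0 < c -> 0 <= x / c.
Proof. intros. unfold Rdiv. apply Rmult_le_pos; auto. left; now apply Rinv_0_lt_compat. Qed.

Definition decel (P : Params) (s : St) (Nh : nat) (i : nat) : St :=
  traj P (fun _ => v3scale (- / (INR Nh * dt P)) (vel s)) s (Nat.min i Nh).

Lemma cont_decel P X m Nh u i : cont P X m Nh u i = decel P (nom P X m u 1) Nh (i - 1).
Proof. reflexivity. Qed.

Lemma traj_ext P u u' s i : (forall t, (t < i)%nat -> u t = u' t) -> traj P u s i = traj P u' s i.
Proof.
  induction i; intros H; simpl; auto.
  rewrite IHi by (intros; apply H; lia). rewrite H by lia. reflexivity.
Qed.

Lemma traj_shift P u s j : traj P u s (S j) = traj P (fun t => u (S t)) (dyn P s (u 0%nat)) j.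
Proof.
  induction j; simpl; auto. simpl in IHj. rewrite IHj. reflexivity.
Qed.

Lemma dyn_rest P x : vel x = v3zero -> dyn P x v3zero = x.
Proof.
  destruct x as [p v]; simpl; intros ->. unfold dyn; simpl.
  apply St_eq; simpl; auto. destruct p; unfold v3add, v3scale, v3zero; apply V3_eq; simpl; ring.
  unfold v3add, v3scale, v3zero; apply V3_eq; simpl; ring.
Qed.

Lemma traj_stay P u s n : (forall t, (n <= t)%nat -> u t = v3zero) ->
  vel (traj P u s n) = v3zero -> forall d, traj P u s (n + d) = traj P u s n.
Proof.
  intros Hu Hv d. induction d. now rewrite Nat.add_0_r.
  rewrite Nat.add_succ_r. simpl. rewrite IHd, Hu by lia. now apply dyn_rest.
Qed.

Lemma vel_traj_const P w s i :
  vel (traj P (fun _ => w) s i) = v3add (vel s) (v3scale (INR i * dt P) w).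
Proof.
  induction i; simpl.
  - destruct (vel s), w; unfold v3add, v3scale; apply V3_eq; simpl; ring.
  - rewrite IHi. destruct (vel s), w; unfold v3add, v3scale; apply V3_eq; simpl;
    destruct i; simpl; ring.
Qed.

Lemma ref_n_zero P s : params_ok P -> ref_n P s = 0%nat -> vel s = v3zero.
Proof.
  intros [Hdt [Ha _]] H. apply norm0_zero.
  unfold ref_n in H.
  assert (Hc: 0 < abar P * dt P) by nra.
  pose proof (norm_nonneg (vel s)).
  pose proof (ceil_spec (v3norm (vel s) / (abar P * dt P))
     ltac:(apply div_nonneg; lra)) as [H1 _].
  rewrite H in H1. simpl in H1.
  apply Rmult_le_compat_r with (r := abar P * dt P) in H1; [|lra].
  unfold Rdiv in H1. rewrite Rmult_assoc, Rinv_l in H1 by lra. lra.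
Qed.

Lemma ref_traj P s i : params_ok P ->
  traj P (ref_input P s) s i = decel P s (ref_n P s) i.
Proof.
  intros Hp. pose proof Hp as [Hdt _].
  set (n := ref_n P s).
  set (w := v3scale (- / (INR n * dt P)) (vel s)).
  assert (Hlow: forall i, (i <= n)%nat -> traj P (ref_input P s) s i = traj P (fun _ => w) s i).
  { intros i0 Hi0. apply traj_ext. intros t Ht. unfold ref_input.
    fold n. replace (t <? n)%nat with true. reflexivity. symmetry; apply Nat.ltb_lt; lia. }
  unfold decel. fold n. fold w.
  destruct (Nat.le_gt_cases i n).
  - rewrite Nat.min_l by lia. now apply Hlow.
  - rewrite Nat.min_r by lia.
    replace i with (n + (i - n))%nat by lia.
    rewrite traj_stay. now apply Hlow.
    + intros t Ht. unfold ref_input. fold n. replace (t <? n)%nat with false. reflexivity.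
      symmetry; apply Nat.ltb_ge; lia.
    + rewrite Hlow by lia. rewrite vel_traj_const.
      destruct (Nat.eq_dec n 0) as [Hn|Hn].
      * rewrite (ref_n_zero P s Hp Hn). rewrite Hn. unfold w, v3add, v3scale, v3zero.
        apply V3_eq; simpl; ring.
      * assert (INR n <> 0) by (apply not_0_INR; auto).
        unfold w. destruct (vel s). unfold v3add, v3scale, v3zero; apply V3_eq; simpl;
        field; lra.
Qed.

Lemma decel_shift P s Nh i : params_ok P -> (1 <= Nh)%nat ->
  decel P s Nh (S i) =
  decel P (dyn P s (v3scale (- / (INR Nh * dt P)) (vel s))) (Nh - 1) i.
Proof.
  intros [Hdt _] HN. unfold decel.
  replace (Nat.min (S i) Nh) with (S (Nat.min i (Nh - 1))) by lia.
  rewrite traj_shift.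
  destruct (Nat.eq_dec Nh 1) as [->|Hn].
  - simpl. replace (Nat.min i 0) with 0%nat by lia. reflexivity.
  - replace (v3scale (- / (INR (Nh - 1) * dt P))
       (vel (dyn P s (v3scale (- / (INR Nh * dt P)) (vel s)))))
      with (v3scale (- / (INR Nh * dt P)) (vel s)). reflexivity.
    rewrite minus_INR by lia. simpl.
    assert (INR Nh <> 0) by (apply not_0_INR; lia).
    assert (INR Nh - 1 <> 0).
    { intro Hc. apply Hn. apply INR_eq. simpl. lra. }
    destruct (vel s); unfold dyn, v3add, v3scale; apply V3_eq; simpl; field; split; lra.
Qed.

Lemma Nt_ref P X m : Nt P X m = ref_n P (X m).
Proof. reflexivity. Qed.

Lemma cand_cont P X m i : params_ok P -> (1 <= i)%nat ->
  cont P X m (Nt P X m - 1) (ref_input P (X m)) i = traj P (ref_input P (X m)) (X m) i.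
Proof.
  intros Hp Hi. rewrite cont_decel. rewrite Nt_ref.
  unfold nom. rewrite !ref_traj by auto.
  set (n := ref_n P (X m)).
  destruct (Nat.eq_dec n 0) as [Hn|Hn].
  - rewrite Hn. unfold decel. simpl. replace (Nat.min i 0) with 0%nat by lia.
    replace (Nat.min (i-1) 0) with 0%nat by lia. reflexivity.
  - replace (decel P (X m) n 1) with
      (dyn P (X m) (v3scale (- / (INR n * dt P)) (vel (X m)))).
    + rewrite <- decel_shift by (auto; lia). f_equal; lia.
    + unfold decel. replace (Nat.min 1 n) with 1%nat by lia. reflexivity.
Qed.

Lemma ref_next P X X' j Nh u : params_ok P ->
  X' j = nom P X j u 1 -> ref_n P (X' j) = Nh ->
  forall i, traj P (ref_input P (X' j)) (X' j) i = cont P X j Nh u (S i).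
Proof.
  intros Hp HX Hn i. rewrite ref_traj by auto. rewrite Hn, cont_decel.
  replace (S i - 1)%nat with i by lia. now rewrite <- HX.
Qed.

Lemma cont_cap P X j Nh u i : (1 <= i)%nat ->
  cont P X j Nh u i = cont P X j Nh u (Nat.min i (Nh + 1)).
Proof.
  intros. rewrite !cont_decel. unfold decel. f_equal. lia.
Qed.

Lemma sep P Sj Sm i qj qm : params_ok P -> dist_jm P Sj Sm i <> 0 ->
  ca_constraint P Sj Sm i qm -> ca_constraint P Sm Sj i qj ->
  2 * rho P <= v3norm (v3sub qj qm).
Proof.
  intros Hp Hd C1 C2. unfold ca_constraint, dist_jm in *.
  destruct Hp as [_ [_ [_ [Hr _]]]].
  destruct (ref_pos P Sj i) as [a1 a2 a3], (ref_pos P Sm i) as [b1 b2 b3],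
    qj as [x1 x2 x3], qm as [y1 y2 y3].
  unfold v3norm, v3sub, v3dot, v3scale in *; simpl in *.
  set (D := (a1 - b1) * (a1 - b1) + (a2 - b2) * (a2 - b2) + (a3 - b3) * (a3 - b3)) in *.
  replace ((b1 - a1) * (b1 - a1) + (b2 - a2) * (b2 - a2) + (b3 - a3) * (b3 - a3)) with D in C2
    by (unfold D; ring).
  assert (HD0: 0 <= D) by (unfold D; pose proof (Rle_0_sqr (a1-b1)); pose proof (Rle_0_sqr (a2-b2)); pose proof (Rle_0_sqr (a3-b3)); unfold Rsqr in *; lra).
  set (d := sqrt D) in *.
  assert (Hdd: d * d = D) by (apply sqrt_sqrt; auto).
  assert (Hdpos: 0 < d) by (pose proof (sqrt_pos D); fold d in H; lra).
  set (W := (x1 - y1) * (x1 - y1) + (x2 - y2) * (x2 - y2) + (x3 - y3) * (x3 - y3)).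
  set (G := (a1 - b1) * (x1 - y1) + (a2 - b2) * (x2 - y2) + (a3 - b3) * (x3 - y3)).
  assert (HG: 2 * rho P * d <= G).
  { assert (E1: / d * (a1 - b1) * y1 + / d * (a2 - b2) * y2 + / d * (a3 - b3) * y3
      - (/ d * (a1 - b1) * b1 + / d * (a2 - b2) * b2 + / d * (a3 - b3) * b3)
      = / d * ((a1-b1)*(y1-b1) + (a2-b2)*(y2-b2) + (a3-b3)*(y3-b3))) by ring.
    assert (E2: / d * (b1 - a1) * x1 + / d * (b2 - a2) * x2 + / d * (b3 - a3) * x3
      - (/ d * (b1 - a1) * a1 + / d * (b2 - a2) * a2 + / d * (b3 - a3) * a3)
      = / d * ((b1-a1)*(x1-a1) + (b2-a2)*(x2-a2) + (b3-a3)*(x3-a3))) by ring.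
    set (S1 := (a1-b1)*(y1-b1) + (a2-b2)*(y2-b2) + (a3-b3)*(y3-b3)) in *.
    set (S2 := (b1-a1)*(x1-a1) + (b2-a2)*(x2-a2) + (b3-a3)*(x3-a3)) in *.
    assert (L1: / d * S1 <= d / 2 - rho P) by lra.
    assert (L2: / d * S2 <= d / 2 - rho P) by lra.
    assert (M1: S1 <= d * d / 2 - rho P * d).
    { apply Rmult_le_compat_l with (r := d) in L1; [|lra].
      replace (d * (/ d * S1)) with S1 in L1 by (field; lra). lra. }
    assert (M2: S2 <= d * d / 2 - rho P * d).
    { apply Rmult_le_compat_l with (r := d) in L2; [|lra].
      replace (d * (/ d * S2)) with S2 in L2 by (field; lra). lra. }
    assert (S1 + S2 = D - G) by (unfold S1, S2, D, G; ring).
    lra. }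
  assert (CS: G * G <= D * W).
  { unfold G, D, W.
    pose proof (Rle_0_sqr ((a1-b1)*(x2-y2)-(a2-b2)*(x1-y1)));
    pose proof (Rle_0_sqr ((a1-b1)*(x3-y3)-(a3-b3)*(x1-y1)));
    pose proof (Rle_0_sqr ((a2-b2)*(x3-y3)-(a3-b3)*(x2-y2))); unfold Rsqr in *. nra. }
  assert (HW: (2 * rho P) * (2 * rho P) <= W).
  { assert (0 <= 2 * rho P * d) by nra.
    assert ((2 * rho P * d) * (2 * rho P * d) <= G * G) by nra.
    assert (d * d * ((2 * rho P) * (2 * rho P)) <= d * d * W) by nra.
    apply Rmult_le_reg_l with (r := d * d). nra. exact H1. }
  rewrite <- (sqrt_square (2 * rho P)) by lra.
  apply sqrt_le_1; [nra| unfold W; pose proof (Rle_0_sqr (x1-y1)); pose proof (Rle_0_sqr (x2-y2)); pose proof (Rle_0_sqr (x3-y3)); unfold Rsqr in *; lra | exact HW].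
Qed.

Lemma div_le_iff x b c : 0 < c -> (x / c <= b <-> x <= b * c).
Proof.
  intro Hc. split; intro H.
  - apply Rmult_le_compat_r with (r := c) in H; [|lra].
    replace (x / c * c) with x in H by (field; lra). exact H.
  - apply Rmult_le_compat_r with (r := / c) in H; [|left; now apply Rinv_0_lt_compat].
    replace (b * c * / c) with b in H by (field; lra). exact H.
Qed.

Lemma div_lt_iff x b c : 0 < c -> (b < x / c <-> b * c < x).
Proof.
  intro Hc. split; intro H.
  - apply Rmult_lt_compat_r with (r := c) in H; [|lra].
    replace (x / c * c) with x in H by (field; lra). exact H.
  - apply Rmult_lt_compat_r with (r := / c) in H; [|now apply Rinv_0_lt_compat].
    replace (b * c * / c) with b in H by (field; lra). exact H.
Qed.

Lemma validC P X j u0 : params_ok P -> (1 <= Nt P X j)%nat ->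
  v3norm u0 <= abar P ->
  v3norm (vel (dyn P (X j) u0)) <= abar P * INR (Nt P X j - 1) * dt P ->
  ceil_nat (v3norm (vel (dyn P (X j) u0)) / (abar P * dt P)) = (Nt P X j - 1)%nat.
Proof.
  intros Hp Hn Hu Hv. pose proof Hp as [Hdt [Ha _]].
  assert (Hc: 0 < abar P * dt P) by nra.
  set (n := Nt P X j) in *.
  set (v0 := vel (X j)).
  set (v1 := vel (dyn P (X j) u0)) in *.
  assert (E: v0 = v3add v1 (v3scale (- dt P) u0)).
  { unfold v1, v0, dyn; simpl. destruct (vel (X j)), u0; unfold v3add, v3scale; apply V3_eq; simpl; ring. }
  assert (T: v3norm v0 <= v3norm v1 + dt P * abar P).
  { rewrite E. eapply Rle_trans; [apply norm_tri|]. rewrite norm_scale.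
    rewrite Rabs_left by lra. nra. }
  pose proof (ceil_spec (v3norm v0 / (abar P * dt P)) (div_nonneg _ _ (norm_nonneg _) Hc)) as [S1 S2].
  change (ceil_nat (v3norm v0 / (abar P * dt P))) with n in S1, S2.
  rewrite minus_INR in * by lia. simpl INR in *.
  apply ceil_unique. apply div_nonneg; auto using norm_nonneg.
  split; rewrite minus_INR by lia; simpl INR.
  - apply div_lt_iff; auto.
    assert (v3norm v0 / (abar P * dt P) > INR n - 1) by lra.
    apply div_lt_iff in H; auto.
    replace (dt P * abar P) with (abar P * dt P) in T by ring.
    set (c := abar P * dt P) in *.
    assert ((INR n - 1 - 1) * c = (INR n - 1) * c - c) by ring. lra.
  - apply div_le_iff; auto. assert (abar P * (INR n - 1) * dt P = (INR n - 1) * (abar P * dt P)) by ring. lra.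
Qed.

Definition AI P Sset (X X' : nat -> St) j : Prop := exists Nh u,
  ftocp_wd P X j /\ ftocp_constr P Sset X j Nh None u /\
  X' j = nom P X j u 1 /\ ref_n P (X' j) = Nh /\ (Nh <= Ntil P)%nat.

Lemma constr_none P Sset X j Nh vb u :
  ftocp_constr P Sset X j Nh vb u -> ftocp_constr P Sset X j Nh None u.
Proof. intros [A [B [C [D _]]]]. repeat split; auto. Qed.

Lemma extract P Sset J X X' j sl a0 : params_ok P -> (Nt P X j <= Ntil P)%nat ->
  solver_ok P Sset J X j sl -> cmc_applies P Sset X j sl a0 ->
  X' j = dyn P (X j) a0 -> AI P Sset X X' j.
Proof.
  intros Hp HN [SA [SB SC]] Happ HX.
  pose proof Hp as [_ [_ [_ [_ [_ [HN1 HN2]]]]]].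
  destruct Happ as [[[Hlt [Hf Hv]] Ha0] | [[[_ [Hf Hv]] Ha0] | [[_ [_ [Hn1 Hf]]] Ha0]]].
  - destruct (SA Hlt Hf) as [Hwd [Hc _]].
    exists (step_Nhat P X j StepA), (sl StepA).
    split; [auto|split; [eapply constr_none; eauto|]].
    split; [rewrite HX, Ha0; reflexivity|].
    split; [rewrite HX, Ha0; exact Hv|]. simpl. lia.
  - destruct (SB Hf) as [Hwd [Hc _]].
    exists (step_Nhat P X j StepB), (sl StepB).
    split; [auto|split; [eapply constr_none; eauto|]].
    split; [rewrite HX, Ha0; reflexivity|].
    split; [rewrite HX, Ha0; exact Hv|]. simpl. lia.
  - destruct (SC Hn1 Hf) as [Hwd [Hc _]].
    exists (step_Nhat P X j StepC), (sl StepC).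
    split; [auto|split; [eapply constr_none; eauto|]].
    split; [rewrite HX, Ha0; reflexivity|].
    split; [|simpl; lia].
    rewrite HX, Ha0. destruct Hc as [Hu [_ [_ [_ Hvb]]]].
    apply (validC P X j (sl StepC 0%nat) Hp Hn1).
    + apply Hu. lia.
    + exact Hvb.
Qed.

Lemma F1 P Sset X j Nh u : params_ok P -> ftocp_constr P Sset X j Nh None u ->
  forall i, (1 <= i)%nat -> Sset j (Defs.pos (cont P X j Nh u i)).
Proof.
  intros Hp [_ [Hn [Hc _]]] i Hi.
  pose proof Hp as [_ [_ [_ [_ [_ [HN1 HN2]]]]]].
  rewrite cont_cap by lia.
  destruct (Nat.eq_dec (Nat.min i (Nh + 1)) 1) as [E|E].
  - rewrite E. rewrite cont_decel. unfold decel. replace (Nat.min (1-1) Nh) with 0%nat by lia. apply (Hn 1%nat). lia.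
  - apply Hc. lia.
Qed.

Lemma sep' P Sset X X' j m i : params_ok P ->
  AI P Sset X X' j -> AI P Sset X X' m -> (j < nagents P)%nat -> (m < nagents P)%nat ->
  j <> m -> (1 <= i <= hor P)%nat -> 2 * rho P <= dist_jm P (X' j) (X' m) i.
Proof.
  intros Hp [Nj [uj [Wj [Cj [Xj [Rj Lj]]]]]] [Nm [um [Wm [Cm [Xm [Rm Lm]]]]]] Hj Hm Hjm Hi.
  pose proof Hp as [_ [_ [_ [_ [_ [HN1 HN2]]]]]].
  unfold dist_jm, ref_pos.
  rewrite (ref_next P X X' j Nj uj Hp Xj Rj), (ref_next P X X' m Nm um Hp Xm Rm).
  set (i1 := Nat.min (S i) (hor P)).
  assert (Ej: cont P X j Nj uj (S i) = cont P X j Nj uj i1).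
  { rewrite cont_cap by lia. rewrite (cont_cap P X j Nj uj i1) by (unfold i1; lia).
    f_equal. unfold i1. lia. }
  assert (Em: cont P X m Nm um (S i) = cont P X m Nm um i1).
  { rewrite cont_cap by lia. rewrite (cont_cap P X m Nm um i1) by (unfold i1; lia).
    f_equal. unfold i1. lia. }
  rewrite Ej, Em.
  destruct Cj as [_ [_ [_ [CAj _]]]]. destruct Cm as [_ [_ [_ [CAm _]]]].
  apply (sep P (X j) (X m) i1).
  - auto.
  - apply Wm; auto. unfold i1; lia.
  - apply CAm; auto. unfold i1; lia.
  - apply CAj; auto. unfold i1; lia.
Qed.

Lemma cand_feasible P Sset X X' m : params_ok P ->
  (forall j, (j < nagents P)%nat -> AI P Sset X X' j) -> (m < nagents P)%nat ->
  ftocp_feasible P Sset X' m (Nt P X' m - 1) (Some (abar P * INR (Nt P X' m - 1) * dt P)).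
Proof.
  intros Hp HAI Hm.
  pose proof Hp as [Hdt [Ha [_ [Hr [_ [HN1 HN2]]]]]].
  assert (Hc: 0 < abar P * dt P) by nra.
  assert (SEP: forall j i, (j < nagents P)%nat -> j <> m -> (1 <= i <= hor P)%nat ->
     2 * rho P <= dist_jm P (X' j) (X' m) i).
  { intros j i Hj Hjm Hi. apply (sep' P Sset X); auto. }
  pose proof (HAI m Hm) as [Nm [um [Wm [Cm [Xm [Rm Lm]]]]]].
  assert (SS: forall i, (1 <= i)%nat ->
     Sset m (Defs.pos (traj P (ref_input P (X' m)) (X' m) i))).
  { intros i Hi. rewrite (ref_next P X X' m Nm um Hp Xm Rm).
    apply (F1 P Sset X m Nm um Hp Cm). lia. }
  split.
  { intros j i Hj Hjm Hi. pose proof (SEP j i Hj Hjm Hi). lra. }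
  exists (ref_input P (X' m)).
  set (n := Nt P X' m).
  assert (Hn: n = ref_n P (X' m)) by reflexivity.
  pose proof (ceil_spec (v3norm (vel (X' m)) / (abar P * dt P))
    (div_nonneg _ _ (norm_nonneg _) Hc)) as [S1 S2].
  change (ceil_nat (v3norm (vel (X' m)) / (abar P * dt P))) with n in S1, S2.
  apply div_le_iff in S1; auto.
  split; [|split; [|split; [|split]]].
  - intros i Hi. unfold ref_input. rewrite <- Hn.
    destruct (i <? n)%nat eqn:E.
    + apply Nat.ltb_lt in E.
      assert (Hn0: 0 < INR n) by (apply lt_0_INR; lia).
      rewrite norm_scale. rewrite Rabs_left.
      2:{ apply Ropp_lt_gt_0_contravar. apply Rinv_0_lt_compat. nra. }
      rewrite Ropp_involutive.
      apply Rmult_le_compat_l with (r := / (INR n * dt P)) in S1.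
      2:{ left. apply Rinv_0_lt_compat. nra. }
      replace (/ (INR n * dt P) * (INR n * (abar P * dt P))) with (abar P) in S1
        by (field; lra). exact S1.
    + rewrite norm_zero. lra.
  - intros i Hi. apply SS. lia.
  - intros i Hi. rewrite cand_cont by (auto; lia). apply SS. lia.
  - intros j i Hj Hjm Hi. rewrite cand_cont by (auto; lia).
    pose proof (SEP j i Hj Hjm Hi).
    unfold ca_constraint. cbv zeta.
    change (Defs.pos (traj P (ref_input P (X' m)) (X' m) i)) with (ref_pos P (X' m) i).
    lra.
  - unfold nom. simpl traj. fold n.
    unfold ref_input. rewrite <- Hn.
    destruct (Nat.eq_dec n 0) as [E|E].
    + rewrite E. simpl.
      rewrite (ref_n_zero P (X' m) Hp ltac:(rewrite <- Hn; exact E)).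
      replace (v3add v3zero (v3scale (dt P) v3zero)) with v3zero
        by (unfold v3add, v3scale, v3zero; apply V3_eq; simpl; ring).
      rewrite norm_zero. lra.
    + replace (0 <? n)%nat with true by (symmetry; apply Nat.ltb_lt; lia).
      assert (Hn0: 0 < INR n) by (apply lt_0_INR; lia).
      replace (vel (dyn P (X' m) (v3scale (- / (INR n * dt P)) (vel (X' m)))))
        with (v3scale ((INR n - 1) / INR n) (vel (X' m))).
      2:{ unfold dyn; simpl. destruct (vel (X' m)); unfold v3add, v3scale; apply V3_eq; simpl;
          field; lra. }
      rewrite norm_scale. rewrite minus_INR by lia. simpl INR.
      assert (H1: 1 <= INR n) by (apply (le_INR 1); lia).
      rewrite Rabs_right.
      2:{ apply Rle_ge. apply div_nonneg; lra. }
      apply Rmult_le_compat_l with (r := (INR n - 1) / INR n) in S1.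
      2:{ apply div_nonneg; lra. }
      replace ((INR n - 1) / INR n * (INR n * (abar P * dt P))) with
        (abar P * (INR n - 1) * dt P) in S1 by (field; lra). exact S1.
Qed.

Lemma succeed P Sset J X' m sl : params_ok P -> solver_ok P Sset J X' m sl ->
  ftocp_feasible P Sset X' m (Nt P X' m - 1) (Some (abar P * INR (Nt P X' m - 1) * dt P)) ->
  cmc_succeeds P Sset X' m sl.
Proof.
  intros Hp [SA [SB SC]] Hf.
  pose proof Hp as [Hdt [Ha _]].
  assert (Hc: 0 < abar P * dt P) by nra.
  destruct (classic (caseA P Sset X' m sl)) as [HA|HnA].
  { exists (sl StepA 0%nat). left. auto. }
  destruct (classic (caseB P Sset X' m sl)) as [HB|HnB].
  { exists (sl StepB 0%nat). right; left. auto. }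
  destruct (Nat.eq_dec (Nt P X' m) 0) as [E|E].
  - exfalso. apply HnB.
    assert (HfB: step_feasible P Sset X' m StepB).
    { unfold step_feasible, step_Nhat, step_vb. rewrite E in Hf |- *. exact Hf. }
    split; [auto|split; [auto|]].
    destruct (SB HfB) as [_ [[_ [_ [_ [_ Hvb]]]] _]].
    unfold step_vb in Hvb. rewrite E in Hvb. simpl INR in Hvb.
    unfold valid, step_Nhat. rewrite E.
    apply ceil_unique. apply div_nonneg; auto using norm_nonneg.
    pose proof (norm_nonneg (vel (nom P X' m (sl StepB) 1))).
    assert (v3norm (vel (nom P X' m (sl StepB) 1)) = 0) by lra.
    rewrite H0. unfold Rdiv. rewrite Rmult_0_l. simpl. lra.
  - exists (sl StepC 0%nat). right; right. split; auto.
    split; auto. split; auto. split; [lia|]. exact Hf.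
Qed.

Theorem theorem1 (P : Params) (Sset : nat -> V3 -> Prop)
  (J : nat -> (nat -> V3) -> (nat -> St) -> R)
  (s : nat -> nat -> St) (sel : nat -> nat -> Step -> nat -> V3) :
  params_ok P ->
  (forall m, (m < nagents P)%nat -> v3norm (vel (s 0%nat m)) <= vbar P) ->
  (forall k m, (m < nagents P)%nat -> solver_ok P Sset J (s k) m (sel m k)) ->
  (forall k m a0, (m < nagents P)%nat -> cmc_applies P Sset (s k) m (sel m k) a0 ->
     s (S k) m = dyn P (s k m) a0) ->
  (forall m, (m < nagents P)%nat -> cmc_succeeds P Sset (s 0%nat) m (sel m 0%nat)) ->
  forall k m, (m < nagents P)%nat -> cmc_succeeds P Sset (s k) m (sel m k).
Proof.
  intros Hp Hv0 Hsol Hdyn H0.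
  pose proof Hp as [Hdt [Ha _]].
  assert (Hc: 0 < abar P * dt P) by nra.
  assert (Q: forall k m, (m < nagents P)%nat ->
    cmc_succeeds P Sset (s k) m (sel m k) /\ (Nt P (s k) m <= Ntil P)%nat).
  { induction k as [|k IH]; intros m Hm.
    - split; auto. unfold Nt, Ntil. apply ceil_mono.
      + apply div_nonneg; auto using norm_nonneg.
      + unfold Rdiv. apply Rmult_le_compat_r; auto.
        left; now apply Rinv_0_lt_compat.
    - assert (HAI: forall j, (j < nagents P)%nat -> AI P Sset (s k) (s (S k)) j).
      { intros j Hj. destruct (IH j Hj) as [[a0 Happ] HN].
        apply (extract P Sset J (s k) (s (S k)) j (sel j k) a0 Hp HN (Hsol k j Hj) Happ).
        apply Hdyn; auto. }
      split.
      + apply (succeed P Sset J); auto. apply (cand_feasible P Sset (s k)); auto.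
      + destruct (HAI m Hm) as [Nm [um [_ [_ [_ [Rm Lm]]]]]].
        change (Nt P (s (S k)) m) with (ref_n P (s (S k) m)). lia. }
  intros k m Hm. apply Q; auto.
Qed.
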